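(* Assume $n\ge3$. Let $\phi=\sum_{a\in\{1,\dots,n\}^\ell}c_a\,x^{a_1}\cdots x^{a_\ell}$ ($c_a\in\mathbb{C}$) be a homogeneous polynomial of degree $\ell$ satisfying $\sum_{b,c}\eta^{bc}\partial_b\partial_c\phi=0$, and let $\tilde\phi=\sum_a c_a\,\tilde x^{a_1}\tilde x^{a_2}\cdots\tilde x^{a_\ell}$ (composition of operators). Then $\tilde\phi(1)=\phi$.
   Context: $(\eta_{ab})$ is a non-degenerate symmetric complex $n\times n$ matrix with inverse $(\eta^{ab})$; $\partial_a=\partial/\partial x^a$, $\partial^a=\sum_b\eta^{ab}\partial_b$, $x_bx^b=\sum_{b,c}\eta_{bc}x^bx^c$. $H=-\frac12\sum_a(x^a\partial_a+\partial_ax^a)$ acts on homogeneous polynomials of degree $d$ by the scalar $-d-\frac n2$. The operator $\tilde x^a$ on $\mathbb{C}[x^1,\dots,x^n]$ is $\tilde x^a=x^a+\frac1{2H+4}\,x_bx^b\,\partial^a$ (the element $P(x^a+I)$ of the reduction algebra): explicitly, for $\psi$ homogeneous of degree $d\ge1$, $\tilde x^a\psi=x^a\psi+\frac{1}{2-2d-n}\,x_bx^b\,\partial^a\psi$, and $\tilde x^a\psi=x^a\psi$ for $\psi$ constant. *)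

(* Defs.v *)
From mathcomp Require Import all_boot all_order all_algebra.
From mathcomp Require Import mpoly.
Set Implicit Arguments. Unset Strict Implicit. Unset Printing Implicit Defensive.
Import Order.TTheory GRing.Theory Num.Theory.
Local Open Scope ring_scope.

(* Coefficient field: any numeric algebraically closed field (e.g. C). *)
Section Reduction.
Variables (F : numClosedFieldType) (n : nat) (eta : 'M[F]_n).

Definition etainv : 'M[F]_n := invmx eta.

Definition xsq : {mpoly F[n]} :=
  \sum_(b < n) \sum_(c < n) eta b c *: ('X_b * 'X_c).

Definition dup (a : 'I_n) (p : {mpoly F[n]}) : {mpoly F[n]} :=
  \sum_(b < n) etainv a b *: p^`M(b).

(* tilde x^a on a homogeneous polynomial psi of degree d *)
Definition tx_hom (a : 'I_n) (d : nat) (psi : {mpoly F[n]}) : {mpoly F[n]} :=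
  if d is 0 then 'X_a * psi
  else 'X_a * psi + (2%:R - (2 * d)%:R - n%:R)^-1 *: (xsq * dup a psi).

(* tilde x^a on C[x^1..x^n], extended linearly from monomials
   (each monomial 'X_[m] is homogeneous of degree mdeg m) *)
Definition tx (a : 'I_n) (p : {mpoly F[n]}) : {mpoly F[n]} :=
  \sum_(m <- msupp p) p@_m *: tx_hom a (mdeg m) 'X_[m].

Definition laplace (p : {mpoly F[n]}) : {mpoly F[n]} :=
  \sum_(b < n) \sum_(c < n) etainv b c *: (p^`M(c))^`M(b).

Definition phi_of (l : nat) (c : l.-tuple 'I_n -> F) : {mpoly F[n]} :=
  \sum_(a : l.-tuple 'I_n) c a *: \prod_(i <- a) 'X_i.

Definition tphi_one (l : nat) (c : l.-tuple 'I_n -> F) : {mpoly F[n]} :=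
  \sum_(a : l.-tuple 'I_n) c a *: foldr (fun i acc => tx i acc) 1 a.
End Reduction.

(* Main.v *)
Require Import Defs.
From HB Require Import structures.
From mathcomp Require Import all_boot all_order all_algebra.
From mathcomp Require Import mpoly.
From mathcomp Require Import ring.
Set Implicit Arguments. Unset Strict Implicit. Unset Printing Implicit Defensive.
Import Order.TTheory GRing.Theory Num.Theory.
Local Open Scope ring_scope.

Section Aux.
Variables (F : numClosedFieldType) (n : nat).
Implicit Types (p : {mpoly F[n]}).

Lemma dX (i c : 'I_n) : ('X_i : {mpoly F[n]})^`M(c) = (i == c)%:R.
Proof.
rewrite mderivX mnm1E; case: eqP => [->|_]; last by rewrite scale0r.
have -> : (U_(c) - U_(c) = 0)%MM by apply/mnmP=> j; rewrite mnmBE subnn mnm0E.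
by rewrite mpolyX0 scale1r.
Qed.

Lemma dXM (i c : 'I_n) p : ('X_i * p)^`M(c) = (if i == c then p else 0) + 'X_i * p^`M(c).
Proof. by rewrite mderivM dX; case: eqP => _; rewrite ?mul1r ?mul0r. Qed.

Lemma mdegBU (m : 'X_{1..n}) (i : 'I_n) : m i != 0%N -> mdeg (m - U_(i))%MM = (mdeg m).-1.
Proof.
move=> mi; rewrite -{2}(@submK _ U_(i)%MM m) ?lep1mP // mdegD mdeg1 addn1.
by [].
Qed.

Lemma mderiv_homog d (i : 'I_n) p : p \is d.-homog -> p^`M(i) \is d.-1.-homog.
Proof.
move=> /dhomogP hp; rewrite /mderiv big_seq; apply: rpred_sum => m mp.
have [mi0|mi0] := eqVneq (m i) 0%N.
  by rewrite mi0 mul0r scale0r rpred0.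
apply: rpredZ; rewrite dhomogX; change (mdeg (m - U_(i))%MM == d.-1).
by rewrite (mdegBU mi0) -(hp m mp).
Qed.

Lemma mderiv_homog0 (i : 'I_n) p : p \is 0.-homog -> p^`M(i) = 0.
Proof.
move=> /dhomogP hp; rewrite /mderiv big_seq; apply: big1 => m mp.
have : mdeg m = 0%N by apply: hp.
move/eqP; rewrite mdeg_eq0 => /eqP ->; by rewrite mnm0E mul0r scale0r.
Qed.

Lemma euler d p : p \is d.-homog -> \sum_(c < n) 'X_c * p^`M(c) = d%:R *: p.
Proof.
move=> /dhomogP hp.
have eX m : \sum_(c < n) 'X_c * ('X_[m] : {mpoly F[n]})^`M(c) = (mdeg m)%:R *: 'X_[m].
  rewrite mdegE natr_sum scaler_suml; apply: eq_bigr => c _.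
  rewrite mderivX -scalerAr; have [mc0|mc0] := eqVneq (m c) 0%N.
    by rewrite mc0 !scale0r.
  by rewrite -mpolyXD addmC submK ?lep1mP.
rewrite {1 2}[p]mpolyE scaler_sumr.
under eq_bigr do rewrite raddf_sum mulr_sumr.
rewrite exchange_big /= big_seq [RHS]big_seq; apply: eq_bigr => m mp.
under eq_bigr do rewrite mderivZ -scalerAr.
rewrite -scaler_sumr eX !scalerA mulrC; congr (_ * _ *: _); by rewrite -(hp m mp).
Qed.


Lemma sum_delta (V : zmodType) (c : 'I_n) (f : 'I_n -> V) :
  \sum_(q < n) (if q == c then f q else 0) = f c.
Proof. by rewrite -big_mkcond big_pred1_eq. Qed.

Lemma sum_delta' (V : zmodType) (c : 'I_n) (f : 'I_n -> V) :
  \sum_(q < n) (if c == q then f q else 0) = f c.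
Proof. by rewrite -(sum_delta c f); apply: eq_bigr => q _; rewrite eq_sym. Qed.

Lemma sum_ifc (V : zmodType) (P : bool) (f : 'I_n -> V) :
  \sum_(q < n) (if P then f q else 0) = if P then \sum_(q < n) f q else 0.
Proof. by case: P => //; rewrite big1. Qed.

Lemma scaler_if (c : F) (P : bool) (x : {mpoly F[n]}) :
  c *: (if P then x else 0) = if P then c *: x else 0.
Proof. by case: P; rewrite ?scaler0. Qed.

Lemma mulr_delta (x : {mpoly F[n]}) (P : bool) : x * P%:R = if P then x else 0.
Proof. by case: P; rewrite ?mulr1 ?mulr0. Qed.

Lemma mderiv_if (i : 'I_n) (P : bool) (x : {mpoly F[n]}) :
  (if P then x else 0)^`M(i) = if P then x^`M(i) else 0.
Proof. by case: P; rewrite ?mderiv0. Qed.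

Variable (eta : 'M[F]_n).
Hypothesis (sym : eta^T = eta) (unit : eta \in unitmx).

Local Notation e := (etainv eta).

Lemma esym i j : e i j = e j i.
Proof. by rewrite /etainv -{1}sym -trmx_inv mxE. Qed.

Lemma etasym i j : eta i j = eta j i.
Proof. by rewrite -{1}sym mxE. Qed.

Lemma e_eta a q : \sum_b e a b * eta b q = (a == q)%:R.
Proof. by have := congr1 (fun M : 'M[F]_n => M a q) (mulVmx unit); rewrite !mxE. Qed.

Definition y (c : 'I_n) : {mpoly F[n]} := \sum_(q < n) eta c q *: 'X_q.

Lemma ey b : \sum_(c < n) e b c *: y c = 'X_b.
Proof.
rewrite /y; under eq_bigr do rewrite scaler_sumr.
rewrite exchange_big /=.
under eq_bigr do (under eq_bigr do rewrite scalerA; rewrite -scaler_suml e_eta).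
rewrite -(sum_delta' b (fun q => 'X_q)); apply: eq_bigr => q _.
by case: eqP; rewrite ?scale1r ?scale0r.
Qed.

Lemma dy c b : (y c)^`M(b) = eta c b *: 1.
Proof.
rewrite /y raddf_sum /=.
under eq_bigr do rewrite mderivZ dX.
rewrite -(sum_delta b (fun q => eta c q *: (1 : {mpoly F[n]}))); apply: eq_bigr => q _.
by case: (q == b); rewrite ?mulr0n ?scaler0.
Qed.

Lemma dxsq c : (xsq eta)^`M(c) = 2%:R *: y c.
Proof.
rewrite /xsq raddf_sum /=.
under eq_bigr => b _ do rewrite raddf_sum.
under eq_bigr => b _ do under eq_bigr => q _ do rewrite /= mderivZ dXM dX mulr_delta scalerDr !scaler_if.
under eq_bigr => b _ do rewrite big_split /= sum_ifc sum_delta.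
rewrite big_split /= sum_delta /y.
rewrite mulr2n scalerDl scale1r; congr (_ + _).
by apply: eq_bigr => q _; rewrite etasym.
Qed.


Lemma lap_is_linear : linear (laplace eta).
Proof.
move=> a p q; rewrite /laplace scaler_sumr -big_split /=; apply: eq_bigr => b _.
rewrite scaler_sumr -big_split /=; apply: eq_bigr => c _.
by rewrite !(mderivD, mderivZ) scalerDr !scalerA mulrC.
Qed.

HB.instance Definition _ := GRing.isLinear.Build F {mpoly F[n]} {mpoly F[n]} _
  (laplace eta) lap_is_linear.

Lemma dup_is_linear i : linear (dup eta i).
Proof.
move=> a p q; rewrite /dup scaler_sumr -big_split /=; apply: eq_bigr => b _.
by rewrite !(mderivD, mderivZ) scalerDr !scalerA mulrC.
Qed.

HB.instance Definition _ i := GRing.isLinear.Build F {mpoly F[n]} {mpoly F[n]} _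
  (dup eta i) (dup_is_linear i).

Lemma tx_hom_is_linear i d : linear (tx_hom eta i d).
Proof.
move=> a p q; case: d => [|d] /=; first by rewrite mulrDr scalerAr.
rewrite linearP /= !mulrDr !scalerDr -!scalerAr !scalerA [_ * a]mulrC.
by rewrite !addrA; congr (_ + _); rewrite -!addrA; congr (_ + _); rewrite addrC.
Qed.

HB.instance Definition _ i d := GRing.isLinear.Build F {mpoly F[n]} {mpoly F[n]} _
  (tx_hom eta i d) (tx_hom_is_linear i d).

Lemma tx_homog i d p : p \is d.-homog -> tx eta i p = tx_hom eta i d p.
Proof.
move=> /dhomogP hp; rewrite /tx [in RHS](mpolyE p) linear_sum /= big_seq [RHS]big_seq.
apply: eq_bigr => m mp; have hm : mdeg m = d := hp m mp.
by rewrite linearZ /= hm.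
Qed.

Lemma lap_mderiv p a : laplace eta (p^`M(a)) = (laplace eta p)^`M(a).
Proof.
rewrite /laplace raddf_sum /=; apply: eq_bigr => b _.
rewrite raddf_sum /=; apply: eq_bigr => c _.
by rewrite mderivZ (mderiv_comm a c p) (mderiv_comm a b).
Qed.

Lemma lap_dup i p : laplace eta (dup eta i p) = dup eta i (laplace eta p).
Proof.
rewrite /dup linear_sum /=; apply: eq_bigr => a _.
by rewrite linearZ /= lap_mderiv.
Qed.

Lemma lap_homog d p : p \is d.-homog -> laplace eta p \is d.-2.-homog.
Proof.
move=> hp; apply: rpred_sum => b _; apply: rpred_sum => c _; apply: rpredZ.
by move: (mderiv_homog b (mderiv_homog c hp)).
Qed.

Lemma lap_small d p : p \is d.-homog -> (d < 2)%N -> laplace eta p = 0.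
Proof.
move=> hp hd; apply: big1 => b _; apply: big1 => c _.
case: d hp hd => [|[|//]] hp _.
  by rewrite (mderiv_homog0 c hp) mderiv0 scaler0.
by rewrite (mderiv_homog0 b (mderiv_homog c hp)) scaler0.
Qed.

Lemma lapXM i p : laplace eta ('X_i * p) = 2%:R *: dup eta i p + 'X_i * laplace eta p.
Proof.
rewrite /laplace /dup.
under eq_bigr => b _ do under eq_bigr => c _ do
  rewrite dXM raddfD /= dXM mderiv_if !scalerDr !scaler_if scalerAr.
under eq_bigr => b _ do rewrite !big_split /= sum_delta' sum_ifc.
rewrite !big_split /= (sum_delta' i (fun b => \sum_(q < n) e b q *: p^`M(q))) addrA.
rewrite mulr_sumr; congr (_ + _).
  rewrite mulr2n scalerDl scale1r; congr (_ + _).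
  by apply: eq_bigr => b _; rewrite esym.
by apply: eq_bigr => b _; rewrite mulr_sumr.
Qed.


Lemma lap_xsqM d g : g \is d.-homog ->
  laplace eta (xsq eta * g) = (2 * n + 4 * d)%N%:R *: g + xsq eta * laplace eta g.
Proof.
move=> hg.
have E b c : ((xsq eta * g)^`M(c))^`M(b) = (2%:R * eta c b) *: g
   + 2%:R *: (y c * g^`M(b)) + 2%:R *: (y b * g^`M(c)) + xsq eta * (g^`M(c))^`M(b).
  rewrite mderivM dxsq mderivD !mderivM mderivZ dy dxsq -!scalerAl mul1r scalerA.
  by rewrite !addrA.
rewrite /laplace.
under eq_bigr => b _ do under eq_bigr => c _ do rewrite E !scalerDr.
under eq_bigr => b _ do rewrite !big_split /=.
rewrite !big_split /=.
have h1 : \sum_(b < n) \sum_(c < n) e b c *: ((2%:R * eta c b) *: g) = (2 * n)%N%:R *: g.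
  under eq_bigr => b _ do (under eq_bigr => c _ do rewrite scalerA mulrCA;
     rewrite -scaler_suml -mulr_sumr e_eta eqxx mulr1).
  by rewrite sumr_const card_ord natrM -scaler_nat scalerA mulrC.
have h2 : \sum_(b < n) \sum_(c < n) e b c *: (2%:R *: (y c * g^`M(b))) =
   2%:R *: \sum_(b < n) 'X_b * g^`M(b).
  rewrite scaler_sumr; apply: eq_bigr => b _.
  under eq_bigr => c _ do rewrite scalerA mulrC -scalerA scalerAl.
  by rewrite -scaler_sumr -mulr_suml ey.
have h3 : \sum_(b < n) \sum_(c < n) e b c *: (2%:R *: (y b * g^`M(c))) =
   2%:R *: \sum_(b < n) 'X_b * g^`M(b).
  rewrite exchange_big scaler_sumr; apply: eq_bigr => c _ /=.
  under eq_bigr => b _ do rewrite scalerA mulrC -scalerA scalerAl esym.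
  by rewrite -scaler_sumr -mulr_suml ey.
rewrite h1 h2 h3 (euler hg) mulr_sumr.
under [X in _ = _ + X]eq_bigr => b _ do rewrite mulr_sumr.
under [X in _ = _ + X]eq_bigr => b _ do under eq_bigr => c _ do rewrite -scalerAr.
congr (_ + _); rewrite !scalerA -!scalerDl; congr (_ *: _).
by rewrite !(natrD, natrM); ring.
Qed.


Lemma key (n0 : (0 < n)%N) d Q (N : nat) : Q \is d.-homog ->
  laplace eta (xsq eta * Q) = - N%:R *: Q -> Q = 0.
Proof.
elim/ltn_ind: d Q N => d IH Q N hQ hL.
have hL0 := hL; rewrite (lap_xsqM hQ) in hL0.
have hL1 : laplace eta (xsq eta * laplace eta Q) = - (N + (2 * n + 4 * d))%N%:R *: laplace eta Q.
  have := congr1 (laplace eta) hL0; rewrite linearD !linearZ /= => h.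
  apply: (addrI ((2 * n + 4 * d)%N%:R *: laplace eta Q)); rewrite h -scalerDl.
  by congr (_ *: _); rewrite natrD; ring.
have hQ' : laplace eta Q = 0.
  have [d2|d2] := ltnP d 2; first exact: lap_small hQ d2.
  apply: (IH d.-2 _ _ _ (lap_homog hQ) hL1).
  by case: d {IH hQ hL hL0 hL1} d2 => [|[|d]].
move: hL0; rewrite hQ' mulr0 addr0 => /eqP; rewrite -subr_eq0 -scalerBl scaler_eq0.
case/orP => [|/eqP //]; rewrite opprK -natrD pnatr_eq0 addn_eq0.
by rewrite addn_eq0 muln_eq0 (negbTE (lt0n_neq0 n0)).
Qed.


Definition u (s : seq 'I_n) : {mpoly F[n]} := foldr (fun i acc => tx eta i acc) 1 s.

Lemma Xhomog i : ('X_i : {mpoly F[n]}) \is 1.-homog.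
Proof. by rewrite dhomogX; apply/eqP; exact: mdeg1. Qed.

Lemma xsq_homog : xsq eta \is 2.-homog.
Proof.
apply: rpred_sum => b _; apply: rpred_sum => c _; apply: rpredZ.
exact: (dhomogM (Xhomog b) (Xhomog c)).
Qed.

Lemma dup_homog d i p : p \is d.-homog -> dup eta i p \is d.-1.-homog.
Proof.
move=> hp; apply: rpred_sum => b _; apply: rpredZ.
by move: (mderiv_homog b hp).
Qed.


Lemma main_ind (n3 : (3 <= n)%N) s :
  u s \is (size s).-homog /\ laplace eta (u s) = 0 /\
  exists Q, Q \is (size s).-2.-homog /\ ((size s < 2)%N -> Q = 0) /\
     u s = \prod_(i <- s) 'X_i + xsq eta * Q.
Proof.
elim: s => [|i s [hu [hl [Q [hQ [hQ0 hs]]]]]] /=.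
  split; first exact: dhomog1.
  split; first exact: (lap_small (dhomog1 _ _) isT).
  by exists 0; rewrite rpred0 big_nil mulr0 addr0.
rewrite (tx_homog i hu) big_cons.
move: hu hQ hQ0 hs; case: (size s) => [|k] hu hQ hQ0 hs /=.
  have Q0 := hQ0 isT.
  have d0 : dup eta i (u s) = 0.
    by apply: big1 => b _; rewrite (mderiv_homog0 b hu) scaler0.
  split; first by move: (dhomogM (Xhomog i) hu).
  split; first by rewrite lapXM d0 hl scaler0 mulr0 addr0.
  by exists 0; rewrite rpred0 hs Q0 !mulr0 !addr0.
have hc : (2 - (2 * k.+1)%:R - n%:R : F) = - (2 * k + n)%N%:R.
  by rewrite !(natrD, natrM) mulrSr; ring.
rewrite hc.
have nz : (2 * k + n)%N%:R != 0 :> F.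
  by rewrite pnatr_eq0 addn_eq0 negb_and (gtn_eqF (leq_trans _ n3)) ?orbT.
have hd : dup eta i (u s) \is k.-homog by move: (dup_homog i hu).
split.
  apply: rpredD; first by move: (dhomogM (Xhomog i) hu).
  by apply: rpredZ; move: (dhomogM xsq_homog hd).
split.
  rewrite linearD linearZ /= lapXM hl mulr0 addr0 (lap_xsqM hd) lap_dup hl linear0 mulr0 addr0.
  rewrite scalerA -scalerDl; apply/eqP; rewrite scaler_eq0; apply/orP; left.
  apply/eqP; rewrite !(natrD, natrM); field.
  by move: nz; rewrite !(natrD, natrM).
exists ('X_i * Q + (- (2 * k + n)%N%:R)^-1 *: dup eta i (u s)); split.
  apply: rpredD; last exact: rpredZ.
  case: k hu hQ hQ0 hd {hc nz} => [|k] hu hQ hQ0 hd.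
    by rewrite (hQ0 isT) mulr0 rpred0.
  by move: (dhomogM (Xhomog i) hQ).
split => //.
by rewrite hs mulrDr mulrDr -scalerAr mulrCA addrA.
Qed.

End Aux.

Theorem mainTheorem9 (F : numClosedFieldType) (n : nat) (eta : 'M[F]_n)
  (hn : (3 <= n)%N) (heta_sym : eta^T = eta) (heta_inv : eta \in unitmx)
  (l : nat) (c : l.-tuple 'I_n -> F)
  (hharm : laplace eta (phi_of c) = 0) :
  tphi_one eta c = phi_of c.
Proof.
have n0 : (0 < n)%N by apply: leq_trans hn.
set D := tphi_one eta c - phi_of c.
have hD : D = \sum_(a : l.-tuple 'I_n) c a *: (u eta a - \prod_(i <- a) 'X_i).
  by rewrite /D /tphi_one /phi_of -sumrB; apply: eq_bigr => a _; rewrite scalerBr.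
have [Q [hQ hDQ]] : exists Q, Q \is l.-2.-homog /\ D = xsq eta * Q.
  rewrite hD; apply: (big_ind (fun x => exists Q, Q \is l.-2.-homog /\ x = xsq eta * Q)).
  - by exists 0; rewrite rpred0 mulr0.
  - move=> x1 x2 [Q1 [h1 ->]] [Q2 [h2 ->]]; exists (Q1 + Q2).
    by rewrite rpredD // mulrDr.
  - move=> a _; have [_ [_ [Q [hQ [_ hs]]]]] := main_ind heta_sym heta_inv hn a.
    exists (c a *: Q); rewrite size_tuple in hQ; split; first exact: rpredZ.
    by rewrite hs addrC addKr -scalerAr.
have hL : laplace eta D = 0.
  rewrite /D linearB /= hharm subr0 /tphi_one linear_sum big1 // => a _.
  rewrite linearZ /=; have [_ [hl _]] := main_ind heta_sym heta_inv hn a.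
  by change (c a *: laplace eta (u eta a) = 0); rewrite hl scaler0.
have Q0 : Q = 0.
  apply: (key heta_sym heta_inv n0 hQ (N := 0%N)).
  by rewrite -hDQ hL oppr0 scale0r.
by apply/eqP; rewrite -subr_eq0 -/D hDQ Q0 mulr0.
Qed.
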